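(* Let $s,t,z$ be positive integers and put $\theta'=t(2s-1)$, $\tau=\theta'-ts-t$, $p=\min\{\lfloor\frac{z-1}{ts-t}\rfloor,t-1\}$ and $p'=\min\{\lfloor\frac{z-1}{\tau-z+1}\rfloor,t-1\}$. Define the coded exponent sets $$\mathbf{P}(C_A)=\{i+tj: i\in\{0,\dots,t-1\},\ j\in\{0,\dots,s-1\}\},\qquad \mathbf{P}(C_B)=\{t(s-1-k)+\theta' l: k\in\{0,\dots,s-1\},\ l\in\{0,\dots,t-1\}\}.$$ Define the secret exponent set $\mathbf{P}(S_A)$ by: - if $z>ts-t$ and $s,t\neq 1$: $\mathbf{P}(S_A)=\{ts+\theta' l+w: l\in\{0,\dots,p-1\},\ w\in\{0,\dots,t(s-1)-1\}\}\cup\{ts+\theta' p+u: u\in\{0,\dots,z-1-pt(s-1)\}\}$; - if $z\le ts-t$ or $t=1$ or $s=1$: $\mathbf{P}(S_A)=\{ts+\theta' p+u: u\in\{0,\dots,z-1\}\}$. Define the secret exponent set $\mathbf{P}(S_B)$ by: - if $z>\tau$ or $t=1$ or $s=1$: $\mathbf{P}(S_B)=\{ts+\theta'(t-1)+r: r\in\{0,\dots,z-1\}\}$; - if $\frac{\tau+1}{2}<z\le\tau$ and $s,t\neq1$: $\mathbf{P}(S_B)=\{ts+\theta' l'+d: d\in\{0,\dots,\tau-z\},\ l'\in\{0,\dots,p'-1\}\}\cup\{ts+\theta' p'+v: v\in\{0,\dots,z-1-p'(\tau-z+1)\}\}$; - if $z\le\frac{\tau+1}{2}$ and $s,t\neq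 1$: $\mathbf{P}(S_B)=\{ts+v: v\in\{0,\dots,z-1\}\}$. Then for all $i,l\in\{0,\dots,t-1\}$, the integer $i+t(s-1)+tl(2s-1)$ belongs to none of the sumsets $\mathbf{P}(S_A)+\mathbf{P}(C_B)$, $\mathbf{P}(S_A)+\mathbf{P}(S_B)$, $\mathbf{P}(S_B)+\mathbf{P}(C_A)$.
   Context: For integer sets $\mathbf{I},\mathbf{J}$, $\mathbf{I}+\mathbf{J}=\{i+j:i\in\mathbf{I},j\in\mathbf{J}\}$. These sets are the sets of exponents with nonzero coefficient of the polynomials of the PolyDot-CMPC scheme for privately computing $Y=A^TB$ for $m\times m$ matrices $A,B$ over a finite field split into $s$ row-wise and $t$ column-wise blocks: source 1 forms $F_A(x)=C_A(x)+S_A(x)$ with $C_A(x)=\sum_{i=0}^{t-1}\sum_{j=0}^{s-1}A_{i,j}x^{i+tj}$ (blocks $A_{i,j}$ of $A^T$) and $S_A(x)$ the sum of independent uniformly random matrices $\bar A$ times $x^e$ for $e\in\mathbf{P}(S_A)$; source 2 forms $F_B(x)=C_B(x)+S_B(x)$ with $C_B(x)=\sum_{k=0}^{s-1}\sum_{l=0}^{t-1}B_{k,l}x^{t(s-1-k)+\theta' l}$ and $S_B(x)$ likewise a sum of uniformly random matrices times $x^e$, $e\in\mathbf{P}(S_B)$. The exponents $i+t(s-1)+tl(2s-1)$ are those whose coefficients in $C_A(x)C_B(x)$ are the blocks $Y_{i,l}=\sum_j A_{i,j}B_{j,l}$ of $Y$; $z$ is the number of colluding workers. When $s=1$ (so $ts-t=0$)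 the paper takes $p=t-1$. *)

(* Defs.v *)
From mathcomp Require Import all_boot.
Set Implicit Arguments. Unset Strict Implicit. Unset Printing Implicit Defensive.

Definition theta' (s t : nat) : nat := t * (2 * s - 1).
(* tau = theta' - ts - t  (only used when s, t >= 2, where it is >= 0) *)
Definition tau (s t : nat) : nat := theta' s t - t * s - t.
(* p = min(floor((z-1)/(ts-t)), t-1), and p = t-1 when s = 1 (ts - t = 0) *)
Definition pA (s t z : nat) : nat :=
  if s == 1 then t - 1 else minn ((z - 1) %/ (t * s - t)) (t - 1).
Definition pB (s t z : nat) : nat :=
  minn ((z - 1) %/ (tau s t - z + 1)) (t - 1).

Definition PCA (s t : nat) (e : nat) : Prop :=
  exists i j, i < t /\ j < s /\ e = i + t * j.
Definition PCB (s t : nat) (e : nat) : Prop :=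
  exists k l, k < s /\ l < t /\ e = t * (s - 1 - k) + theta' s t * l.

Definition PSA (s t z : nat) (e : nat) : Prop :=
  let p := pA s t z in
  if [&& t * s - t < z, s != 1 & t != 1] then
    (exists l w, l < p /\ w < t * (s - 1) /\ e = t * s + theta' s t * l + w)
    \/ (exists u, u <= z - 1 - p * t * (s - 1) /\ e = t * s + theta' s t * p + u)
  else exists u, u <= z - 1 /\ e = t * s + theta' s t * p + u.

Definition PSB (s t z : nat) (e : nat) : Prop :=
  let p' := pB s t z in
  if [|| tau s t < z, t == 1 | s == 1] then
    exists r, r <= z - 1 /\ e = t * s + theta' s t * (t - 1) + r
  else if tau s t + 1 < 2 * z then
    (exists d l', d <= tau s t - z /\ l' < p' /\ e = t * s + theta' s t * l' + d)
    \/ (exists v, v <= z - 1 - p' * (tau s t - z + 1) /\ e = t * s + theta' s t * p' + v)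
  else
    exists v, v <= z - 1 /\ e = t * s + v.

Definition in_sumset (X Y : nat -> Prop) (n : nat) : Prop :=
  exists a b, X a /\ Y b /\ n = a + b.

(* Main.v *)
Require Import Defs.
From mathcomp Require Import all_boot zify.
Lemma rem2 th Q R L rho : th*Q + R = th*L + rho -> rho < th -> R < 2*th -> R = rho \/ R = rho + th.
Proof. move=> h3 h1 h2.
case: (ltngtP Q L) => hQ.
- have [d hd] : exists d, L = Q + d.+1 by exists (L - Q).-1; lia.
  rewrite hd mulnDr in h3.
  case: d {hd} h3 => [|d] h3; first lia.
  have : th * 2 <= th * d.+2 by rewrite leq_mul2l; lia.
  lia.
- have [d hd] : exists d, Q = L + d.+1 by exists (Q - L).-1; lia.
  rewrite hd mulnDr in h3.
  have : th * 1 <= th * d.+1 by rewrite leq_mul2l; lia.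
  lia.
- subst; lia.
Qed.

Lemma th_eq s t : theta' s t = 2*(t*s) - t.
Proof. rewrite /theta' mulnBr muln1 mulnCA. lia. Qed.
Lemma ts1 s t : t*(s-1) = t*s - t.
Proof. by rewrite mulnBr muln1. Qed.

Lemma SA_char s t z a : 0<s -> 0<t -> 0<z -> PSA s t z a ->
 t*s + theta' s t * (t-1) <= a \/ exists q r, a = theta' s t * q + r /\ t*s <= r /\ r < theta' s t /\ (z <= t*s - t -> q = 0 /\ r <= t*s + z - 1).
Proof.
move=> hs ht hz; rewrite /PSA /pA.
have hth := th_eq s t.
case: ifP => hc.
- case/and3P: hc => h1 h2 h3.
  rewrite (negbTE h2).
  case => [[l1 [w [hl [hw ->]]]] | [u [hu ->]]].
  + right; exists l1, (t*s + w); rewrite !ts1 in hw *; split; first lia.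
    split; first lia. split; first lia. lia.
  + rewrite /minn; case: ltnP => hm.
    * right; exists ((z - 1) %/ (t * s - t)), (t*s+u).
      have hpos : 0 < t*s - t by lia.
      have := ltn_pmod (z-1) hpos.
      have := divn_eq (z-1) (t*s-t).
      rewrite -mulnA in hu.
      split; first lia. split; first lia. split; last lia.
      lia.
    * left; lia.
- case => u [hu ->].
  case: (eqVneq s 1) => [e1|n1].
  + left; lia.
  case: (eqVneq t 1) => [e2|n2].
  + left; subst t; rewrite subnn muln0; lia.
  have hz2 : z <= t*s - t.
    move/negbT: hc; rewrite n1 n2 /= andbT; lia.
  rewrite divn_small; last lia.
  rewrite min0n; right; exists 0, (t*s+u); lia.
Qed.

Lemma SB_char s t z b : 0<s -> 0<t -> 0<z -> PSB s t z b ->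
 t*s + theta' s t * (t-1) <= b \/ exists q r, b = theta' s t * q + r /\ t*s <= r /\
   r + z <= t*s + tau s t /\ z <= tau s t /\ tau s t = t*s - 2 * t /\ 1 < s /\ 1 < t.
Proof.
move=> hs ht hz; rewrite /PSB /pB.
have hth := th_eq s t.
have htau : tau s t = theta' s t - t * s - t by [].
case: ifP => hc.
  by case => r [hr ->]; left; lia.
have [h1 h2 h3] : [/\ z <= tau s t, t != 1 & s != 1].
  by move/negbT: hc; rewrite !negb_or -leqNgt; case/and3P.
have hts : 1 < s /\ 1 < t by lia.
case: ifP => hc2.
- case => [[d [l' [hd [hl ->]]]] | [v [hv ->]]].
  + right; exists l', (t*s + d); lia.
  + rewrite /minn; case: ltnP => hm.
    * right; exists ((z - 1) %/ (tau s t - z + 1)), (t*s+v).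
      have hpos : 0 < tau s t - z + 1 by lia.
      have := ltn_pmod (z-1) hpos.
      have := divn_eq (z-1) (tau s t - z + 1).
      lia.
    * left; lia.
- case => v [hv ->]; right; exists 0, (t*s+v); lia.
Qed.

Theorem theorem1 (s t z : nat) :
  0 < s -> 0 < t -> 0 < z ->
  forall i l, i < t -> l < t ->
    let n := i + t * (s - 1) + t * l * (2 * s - 1) in
    ~ in_sumset (PSA s t z) (PCB s t) n /\
    ~ in_sumset (PSA s t z) (PSB s t z) n /\
    ~ in_sumset (PSB s t z) (PCA s t) n.
Proof.
move=> hs ht hz i l hi hl n.
have hth := th_eq s t.
have hn : n = theta' s t * l + (i + (t*s - t)).
  by rewrite /n /theta' mulnAC ts1; lia.
have hlt : theta' s t * l <= theta' s t * (t-1) by rewrite leq_mul2l; lia.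
have hts : t <= t*s by rewrite leq_pmulr.
split; [|split].
- case=> a [b [ha [hb hab]]].
  case: (SA_char _ _ _ _ hs ht hz ha) => [big|[q [r [ea [r1 [r2 _]]]]]]; first lia.
  case: hb => k [l' [hk [hl' eb]]].
  have hm : t*(s-1-k) <= t*s - t by rewrite -ts1 leq_mul2l; lia.
  move: eb hm; generalize (t*(s-1-k)) => X eb hm.
  move/esym: hab; rewrite hn ea eb [X + _]addnC addnACA -mulnDr => /rem2 H.
  have [] := H; lia.
- case=> a [b [ha [hb hab]]].
  case: (SB_char _ _ _ _ hs ht hz hb) => [big|[q2 [r2 [eb [r21 [r22 [r23 [r24 _]]]]]]]]; first lia.
  case: (SA_char _ _ _ _ hs ht hz ha) => [big|[q [r [ea [ra1 [ra2 r3]]]]]]; first lia.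
  have [q0 r4] : q = 0 /\ r <= t*s + z - 1 by apply: r3; lia.
  subst q.
  move/esym: hab; rewrite hn ea eb addnACA -mulnDr => /rem2 H.
  have [] := H; lia.
- case=> b [c [hb [hc hbc]]].
  case: (SB_char _ _ _ _ hs ht hz hb) => [big|[q2 [r2 [eb [r21 [r22 [r23 [r24 _]]]]]]]]; first lia.
  case: hc => i' [j [hi' [hj ec]]].
  have hm : t*j <= t*s - t by rewrite -ts1 leq_mul2l; lia.
  move: ec hm; generalize (t*j) => X ec hm.
  move/esym: hbc; rewrite hn eb ec -addnA => /rem2 H.
  have [] := H; lia.
Qed.
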